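(* For every positive integer $n$, $|S_n(T\cup\{\tau\})|=n$ in the following cases: (1) $T=\{123,132,231\}$ and $\tau\in S_4$ contains at least one permutation in $T$; (2) $T=\{123,132,213\}$ and $\tau=3412$.
   Context: Permutations are written in one-line notation. A permutation $\sigma\in S_n$ contains $\pi\in S_m$ if there are indices $i_1<\dots<i_m$ such that for all $j<l$, $\sigma_{i_j}<\sigma_{i_l}$ iff $\pi_j<\pi_l$; otherwise $\sigma$ avoids $\pi$. For a set $A$ of patterns, $S_n(A)$ is the set of permutations in $S_n$ avoiding every pattern in $A$. *)

(* Defs.v *)
From mathcomp Require Import all_boot perm.
Set Implicit Arguments. Unset Strict Implicit. Unset Printing Implicit Defensive.

Definition occurs (n m : nat) (w : 'I_n -> nat) (p : 'I_m -> nat) : bool :=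
  [exists f : {ffun 'I_m -> 'I_n},
    [forall j : 'I_m, forall l : 'I_m,
       (j < l) ==> ((f j < f l) && ((w (f j) < w (f l)) == (p j < p l)))]].

Definition oneline (n : nat) (s : 'S_n) : 'I_n -> nat := fun i => val (s i).

Definition patw (p : seq nat) : 'I_(size p) -> nat := fun i => nth 0 p i.

Definition contains (n : nat) (s : 'S_n) (p : seq nat) : bool :=
  occurs (@oneline n s) (@patw p).

Definition avoids (n : nat) (s : 'S_n) (p : seq nat) : bool := ~~ contains s p.

Definition Av (n : nat) (A : seq (seq nat)) : {set 'S_n} :=
  [set s : 'S_n | all (avoids s) A].

Definition perm_seq (m : nat) (t : 'S_m) : seq nat := [seq (t i).+1 | i <- enum 'I_m].

(* Main.v *)
Require Import Defs.
From mathcomp Require Import all_boot perm zify.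
Set Implicit Arguments. Unset Strict Implicit. Unset Printing Implicit Defensive.

Lemma card_lt_ord n k : k <= n -> #|[pred y : 'I_n | y < k]| = k.
Proof.
elim: k => [|k IH] Hk.
  by apply: eq_card0 => y; rewrite inE.
have Hk' : k < n by [].
rewrite (@eq_card _ _ [predU1 Ordinal Hk' & [pred y : 'I_n | y < k]]).
  rewrite cardU1 IH. 2: exact: ltnW. 
  by rewrite inE ltnn.
by move=> y; rewrite !inE ltnS leq_eqVlt; congr (_ || _).
Qed.

Lemma rank_perm n (s : 'S_n) i : val (s i) = #|[pred j | s j < s i]|.
Proof.
have := card_preimset [set y : 'I_n | y < s i] (@perm_inj _ s).
rewrite (@eq_card _ [set y : 'I_n | y < s i] [pred y : 'I_n | y < s i]); last by move=> y; rewrite inE.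
rewrite card_lt_ord; last exact: ltnW.
move => E; apply: etrans (esym E) _.
by apply: eq_card => j; rewrite !inE.
Qed.

Lemma perm_cmp n (s t : 'S_n) :
  (forall i j : 'I_n, i < j -> (s i < s j) = (t i < t j)) -> s = t.
Proof.
move=> H.
have H2 : forall i j, (s i < s j) = (t i < t j).
  move=> i j; case: (ltngtP i j) => [/H //|hji|/val_inj ->]; last by rewrite !ltnn.
  have := H _ _ hji.
  have sne : val (s i) != val (s j).
    by apply/eqP => /val_inj/perm_inj E; move: hji; rewrite E ltnn.
  have tne : val (t i) != val (t j).
    by apply/eqP => /val_inj/perm_inj E; move: hji; rewrite E ltnn.
  have L : forall a b : nat, a != b -> (a < b) = ~~ (b < a).
    by move=> a b; case: ltngtP.
  by rewrite (L _ _ sne) (L _ _ tne) => ->.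
apply/permP => i; apply: val_inj.
rewrite (rank_perm s i) (rank_perm t i); apply: eq_card => j; by rewrite !inE H2.
Qed.

Lemma occurs_trans n m k (w : 'I_n -> nat) (p : 'I_m -> nat) (q : 'I_k -> nat) :
  occurs w p -> occurs p q -> occurs w q.
Proof.
move=> /existsP [f /forallP Hf] /existsP [g /forallP Hg].
apply/existsP; exists [ffun j => f (g j)]; apply/forallP => j; apply/forallP => l.
apply/implyP => jl; rewrite !ffunE.
move: (Hg j) => /forallP /(_ l) /implyP /(_ jl) /andP [gl /eqP <-].
by move: (Hf (g j)) => /forallP /(_ (g l)) /implyP /(_ gl).
Qed.

Lemma occurs_perm_seq m (tau : 'S_m) : occurs (@patw (perm_seq tau)) (oneline tau).
Proof.
have E : size (perm_seq tau) = m by rewrite /perm_seq size_map size_enum_ord.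
apply/existsP; exists [ffun j => cast_ord (esym E) j]; apply/forallP => j; apply/forallP => l.
apply/implyP => jl; rewrite !ffunE /=; rewrite jl /=.
have V : forall a : 'I_m, @patw (perm_seq tau) (cast_ord (esym E) a) = (tau a).+1.
  move=> a; rewrite /patw /= /perm_seq (nth_map a) ?size_enum_ord //.
  by rewrite nth_ord_enum.
by rewrite !V ltnS.
Qed.

Definition o3_0 := @Ordinal 3 0 isT.
Definition o3_1 := @Ordinal 3 1 isT.
Definition o3_2 := @Ordinal 3 2 isT.

Lemma occ3 n (w : 'I_n -> nat) x y z : occurs w (@patw [:: x; y; z]) ->
  exists a b c : 'I_n, [/\ a < b, b < c, (w a < w b) = (x < y), (w a < w c) = (x < z) & (w b < w c) = (y < z)].
Proof.
move=> /existsP [f /forallP Hf].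
have P : forall j l : 'I_3, j < l -> (f j < f l) && ((w (f j) < w (f l)) == (@patw [:: x; y; z] j < @patw [:: x; y; z] l)).
  by move=> j l jl; move: (Hf j) => /forallP /(_ l) /implyP /(_ jl).
move: (P o3_0 o3_1 isT) (P o3_0 o3_2 isT) (P o3_1 o3_2 isT) => /andP [h1 /eqP e1] /andP [h2 /eqP e2] /andP [h3 /eqP e3].
by exists (f o3_0), (f o3_1), (f o3_2); split.
Qed.

Lemma mk3 n (w : 'I_n -> nat) x y z (a b c : 'I_n) : a < b -> b < c ->
  (w a < w b) = (x < y) -> (w a < w c) = (x < z) -> (w b < w c) = (y < z) ->
  occurs w (@patw [:: x; y; z]).
Proof.
move=> ab bc e1 e2 e3.
apply/existsP; exists [ffun j : 'I_3 => nth a [:: a; b; c] j].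
apply/forallP => -[[|[|[|j]]] Hj]; apply/forallP => -[[|[|[|l]]] Hl] //=;
  rewrite ffunE /= ffunE /= /patw /=; try by rewrite ?e1 ?e2 ?e3 ?ab ?bc ?(ltn_trans ab bc) /= ?eqxx.
Qed.

Definition o4 (k : nat) (H : k < 4) := @Ordinal 4 k H.

Lemma occ4 n (w : 'I_n -> nat) x y z u : occurs w (@patw [:: x; y; z; u]) ->
  exists a b c d : 'I_n, [/\ a < b, b < c, c < d,
   [/\ (w a < w b) = (x < y), (w a < w c) = (x < z) & (w a < w d) = (x < u)] &
   [/\ (w b < w c) = (y < z), (w b < w d) = (y < u) & (w c < w d) = (z < u)]].
Proof.
move=> /existsP [f /forallP Hf].
have P : forall j l : 'I_4, j < l -> (f j < f l) && ((w (f j) < w (f l)) == (@patw [:: x; y; z; u] j < @patw [:: x; y; z; u] l)).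
  by move=> j l jl; move: (Hf j) => /forallP /(_ l) /implyP /(_ jl).
move: (P (o4 (isT : 0 < 4)) (o4 (isT : 1 < 4)) isT) (P (o4 (isT : 0 < 4)) (o4 (isT : 2 < 4)) isT)
      (P (o4 (isT : 0 < 4)) (o4 (isT : 3 < 4)) isT) (P (o4 (isT : 1 < 4)) (o4 (isT : 2 < 4)) isT)
      (P (o4 (isT : 1 < 4)) (o4 (isT : 3 < 4)) isT) (P (o4 (isT : 2 < 4)) (o4 (isT : 3 < 4)) isT)
 => /andP [h1 /eqP e1] /andP [h2 /eqP e2] /andP [h3 /eqP e3] /andP [h4 /eqP e4] /andP [h5 /eqP e5] /andP [h6 /eqP e6].
by exists (f (o4 (isT : 0 < 4))), (f (o4 (isT : 1 < 4))), (f (o4 (isT : 2 < 4))), (f (o4 (isT : 3 < 4))); do !split.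
Qed.

Lemma mk4 n (w : 'I_n -> nat) x y z u (a b c d : 'I_n) : a < b -> b < c -> c < d ->
  (w a < w b) = (x < y) -> (w a < w c) = (x < z) -> (w a < w d) = (x < u) ->
  (w b < w c) = (y < z) -> (w b < w d) = (y < u) -> (w c < w d) = (z < u) ->
  occurs w (@patw [:: x; y; z; u]).
Proof.
move=> ab bc cd e1 e2 e3 e4 e5 e6.
have ac := ltn_trans ab bc. have bd := ltn_trans bc cd. have ad := ltn_trans ac cd.
apply/existsP; exists [ffun j : 'I_4 => nth a [:: a; b; c; d] j].
apply/forallP => -[[|[|[|[|j]]]] Hj]; apply/forallP => -[[|[|[|[|l]]]] Hl] //=;
  rewrite ffunE /= ffunE /= /patw /=; try by rewrite ?e1 ?e2 ?e3 ?e4 ?e5 ?e6 ?ab ?bc ?cd ?ac ?bd ?ad /= ?eqxx.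
Qed.

Section CaseA.
Variable m : nat.

Definition decb (s : 'S_m.+1) : bool :=
  [forall i : 'I_m.+1, forall j : 'I_m.+1, ((i < j) && (j < m)) ==> (s j < s i)].

Lemma decP (s : 'S_m.+1) : reflect (forall i j : 'I_m.+1, i < j -> j < m -> s j < s i) (decb s).
Proof.
apply: (iffP forallP) => [H i j ij jm|H i]; last first.
  by apply/forallP => j; apply/implyP => /andP [ij jm]; apply: H.
by move: (H i) => /forallP /(_ j) /implyP; apply; rewrite ij jm.
Qed.

Definition gAf (v : 'I_m.+1) (i : 'I_m.+1) : 'I_m.+1 :=
  if i < m then inord (if v <= m.-1 - i then m - i else m.-1 - i) else v.

Lemma gAf_val v i : nat_of_ord (gAf v i) = if i < m then (if v <= m.-1 - i then m - i else m.-1 - i) else v.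
Proof.
rewrite /gAf; case: ifP => // im; rewrite inordK //; case: ifP => ?; lia.
Qed.

Lemma gAf_inj v : injective (gAf v).
Proof.
move=> i j E; apply: ord_inj; move: (congr1 (@nat_of_ord _) E); rewrite !gAf_val.
have := ltn_ord i; have := ltn_ord j; have := ltn_ord v.
case: ifP => ?; case: ifP => ?; try case: ifP => ?; try case: ifP => ?; lia.
Qed.

Definition gA v : 'S_m.+1 := perm (@gAf_inj v).

Lemma gA_val v i : nat_of_ord (gA v i) = if i < m then (if v <= m.-1 - i then m - i else m.-1 - i) else v.
Proof. by rewrite permE gAf_val. Qed.

Lemma gA_dec v : decb (gA v).
Proof.
apply/decP => i j ij jm; rewrite !gA_val.
have im : i < m by apply: ltn_trans ij jm.
rewrite im jm.
case: ifP => ?; case: ifP => ?; lia.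
Qed.

Lemma gA_last v : gA v ord_max = v.
Proof. by apply: ord_inj; rewrite gA_val /= ltnn. Qed.

Lemma gA_inj : injective gA.
Proof. by move=> v w E; rewrite -(gA_last v) -(gA_last w) E. Qed.

Lemma dec_upper (s : 'S_m.+1) : decb s -> forall k, k < m -> s (inord k) <= m - k.
Proof.
move/decP => D; elim => [|k IH] Hk.
  by rewrite subn0 -ltnS.
have := D (inord k) (inord k.+1).
rewrite !inordK; [|lia|lia].
move=> /(_ (ltnSn _) Hk) H; have := IH (ltnW Hk); lia.
Qed.

Lemma dec_lower (s : 'S_m.+1) : decb s -> forall d, d < m -> d <= s (inord (m.-1 - d)).
Proof.
move/decP => D; elim => [|d IH] Hd //.
have := D (inord (m.-1 - d.+1)) (inord (m.-1 - d)).
rewrite !inordK; [|lia|lia].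
have H1 : m.-1 - d.+1 < m.-1 - d by lia.
have H2 : m.-1 - d < m by lia.
move=> /(_ H1 H2) H; have := IH (ltnW Hd); lia.
Qed.

Lemma dec_bounds (s : 'S_m.+1) : decb s -> forall i : 'I_m.+1, i < m -> m.-1 - i <= s i <= m - i.
Proof.
move=> D i im; apply/andP; split.
  have := dec_lower D (d := m.-1 - i); rewrite (_ : m.-1 - (m.-1 - i) = i); last by lia.
  by rewrite inord_val; apply; lia.
by have := dec_upper D im; rewrite inord_val.
Qed.

Lemma dec_unique (s t : 'S_m.+1) : decb s -> decb t -> s ord_max = t ord_max -> s = t.
Proof.
move=> Ds Dt E; apply: perm_cmp => i j ij.
case: (ltnP j m) => jm.
  by move/decP: Ds => /(_ i j ij jm) Hs; move/decP: Dt => /(_ i j ij jm) Ht; 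
     rewrite ltnNge (ltnW Hs) ltnNge (ltnW Ht).
have jmax : j = ord_max by apply: ord_inj => /=; have := ltn_ord j; lia.
subst j.
have im : i < m by [].
have key : forall u : 'S_m.+1, decb u -> (u i < u ord_max) = (m - u ord_max <= i).
  move=> u Du; have := dec_bounds Du im.
  have : nat_of_ord (u i) != nat_of_ord (u ord_max).
    by apply/eqP => /ord_inj/perm_inj H; move: ij; rewrite H ltnn.
  have := ltn_ord (u ord_max).
  case: (ltnP (u i) (u ord_max)); case: (leqP (m - u ord_max) i); lia.
by rewrite (key s Ds) (key t Dt) E.
Qed.

Lemma card_dec : #|[set s : 'S_m.+1 | decb s]| = m.+1.
Proof.
rewrite (_ : [set s | decb s] = gA @: setT).
  by rewrite card_imset ?cardsT ?card_ord //; apply: gA_inj.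
apply/setP => s; rewrite inE; apply/idP/imsetP => [D|[v _ ->]]; last exact: gA_dec.
exists (s ord_max) => //; apply: dec_unique => //; first exact: gA_dec.
by rewrite gA_last.
Qed.

End CaseA.

Lemma dec_no3 m (s : 'S_m.+1) x y z : decb s -> x < y -> ~~ contains s [:: x; y; z].
Proof.
move=> /decP D xy; apply/negP => /occ3 [a [b [c [ab bc e1 _ _]]]].
move: e1; rewrite xy /oneline /= => e1.
have bm : b < m by have := ltn_ord c; move: bc; lia.
have := ltn_trans (D a b ab bm) (e1 : nat_of_ord (s a) < nat_of_ord (s b)).
by rewrite ltnn.
Qed.

Lemma AvA m (tau : 'S_4) :
  has (contains tau) [:: [:: 1; 2; 3]; [:: 1; 3; 2]; [:: 2; 3; 1]] ->
  Av m.+1 [:: [:: 1; 2; 3]; [:: 1; 3; 2]; [:: 2; 3; 1]; perm_seq tau] = [set s | decb s].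
Proof.
move=> Htau; apply/setP => s; rewrite !inE /= /avoids andbT.
apply/idP/idP => [/and4P [H1 H2 H3 _]|D].
  apply/decP => i j ij jm.
  case: (ltngtP (s i) (s j)) => [lt|//|eq]; last first.
    by move: ij; rewrite (perm_inj (ord_inj eq)) ltnn.
  pose k : 'I_m.+1 := ord_max.
  have jk : j < k by [].
  have ik : i < k := ltn_trans ij jk.
  have nek : nat_of_ord (s j) != nat_of_ord (s k).
    by apply/eqP => /ord_inj/perm_inj E; move: jk; rewrite E ltnn.
  have nik : nat_of_ord (s i) != nat_of_ord (s k).
    by apply/eqP => /ord_inj/perm_inj E; move: ik; rewrite E ltnn.
  case: (ltngtP (s j) (s k)) => [jk'|kj|/eqP]; last by rewrite (negbTE nek).
    case/negP: H1; apply: (mk3 ij jk) => /=; rewrite /oneline /=.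
    - exact: lt.
    - exact: (ltn_trans lt jk').
    - exact: jk'.
  case: (ltngtP (s i) (s k)) => [ik'|ki|/eqP]; last by rewrite (negbTE nik).
    case/negP: H2; apply: (mk3 ij jk) => /=; rewrite /oneline /=.
    - exact: lt.
    - exact: ik'.
    - by apply/negbTE; rewrite -leqNgt; apply: ltnW.
  case/negP: H3; apply: (mk3 ij jk) => /=; rewrite /oneline /=.
  - exact: lt.
  - by apply/negbTE; rewrite -leqNgt; apply: ltnW.
  - by apply/negbTE; rewrite -leqNgt; apply: ltnW; apply: ltn_trans lt.
rewrite !dec_no3 //=.
apply/negP => C; move/hasP: Htau => [p pin Cp].
have C' : contains s p := occurs_trans (occurs_trans C (occurs_perm_seq tau)) Cp.
move: pin C'; rewrite !inE => /or3P [/eqP->|/eqP->|/eqP->]; apply/negP; exact: dec_no3.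
Qed.

Section CaseB.
Variable m : nat.
Implicit Types (s t : 'S_m.+1) (i j k l : 'I_m.+1).

Definition nib s : bool :=
  [forall i : 'I_m.+1, forall j : 'I_m.+1, forall k : 'I_m.+1, forall l : 'I_m.+1,
    [&& i < j, s i < s j, k < l & s k < s l] ==> (i == k) && (j == l)].

Lemma nibP s : reflect (forall i j k l : 'I_m.+1, i < j -> s i < s j -> k < l -> s k < s l -> i = k /\ j = l) (nib s).
Proof.
apply: (iffP idP) => [H i j k l a b c d|H].
  move: H => /forallP /(_ i) /forallP /(_ j) /forallP /(_ k) /forallP /(_ l) /implyP.
  by rewrite a b c d => /(_ isT) /andP [/eqP -> /eqP ->].
apply/forallP => i; apply/forallP => j; apply/forallP => k; apply/forallP => l.
by apply/implyP => /and4P [a b c d]; case: (H i j k l a b c d) => -> ->; rewrite !eqxx.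
Qed.

Definition gBn (k i : nat) : nat :=
  if (0 < k) && (i == k.-1) then m - k else if (0 < k) && (i == k) then (m - k).+1 else m - i.

Lemma gBn_le k i : k <= m -> i <= m -> gBn k i <= m.
Proof. rewrite /gBn => ? ?; repeat case: ifP => ?; lia. Qed.

Definition gBf (k : 'I_m.+1) (i : 'I_m.+1) : 'I_m.+1 := inord (gBn k i).

Lemma gBf_val k i : nat_of_ord (gBf k i) = gBn k i.
Proof. by rewrite /gBf inordK // ltnS gBn_le // -ltnS. Qed.

Lemma gBf_inj k : injective (gBf k).
Proof.
move=> i j E; apply: ord_inj; move: (congr1 (@nat_of_ord _) E); rewrite !gBf_val /gBn.
have := ltn_ord i; have := ltn_ord j; have := ltn_ord k.
repeat case: ifP => ?; lia.
Qed.

Definition gB k : 'S_m.+1 := perm (@gBf_inj k).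

Lemma gB_val k i : nat_of_ord (gB k i) = gBn k i.
Proof. by rewrite permE gBf_val. Qed.

Lemma gB_cmp k i j : i < j -> (gB k i < gB k j) = (0 < k) && (i == k.-1 :> nat) && (j == k :> nat).
Proof.
move=> ij; rewrite !gB_val /gBn.
have := ltn_ord i; have := ltn_ord j; have := ltn_ord k.
case: (ltnP 0 k) => k0 /=; last by move=> *; apply/negbTE; rewrite -leqNgt; lia.
case: (eqVneq (nat_of_ord i) k.-1) => /= ei; case: (eqVneq (nat_of_ord j) k.-1) => /= ej;
  try case: (eqVneq (nat_of_ord i) k) => /= ei'; try case: (eqVneq (nat_of_ord j) k) => /= ej';
  move=> *; try (apply/negbTE; rewrite -leqNgt; lia); lia.
Qed.

Lemma gB_nib k : nib (gB k).
Proof.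
apply/nibP => i j a b ij; rewrite gB_cmp // => /andP [/andP [k0 /eqP e1] /eqP e2] ab.
rewrite gB_cmp // => /andP [/andP [_ /eqP e3] /eqP e4].
split; apply: ord_inj; lia.
Qed.


Lemma perm_neq s i j : i != j -> nat_of_ord (s i) != nat_of_ord (s j).
Proof. by move=> ne; apply/eqP => /ord_inj/perm_inj E; rewrite E eqxx in ne. Qed.

Lemma nib_adj s : nib s -> forall i j, i < j -> s i < s j -> nat_of_ord j = i.+1.
Proof.
move=> /nibP N i j ij sij.
case: (ltngtP j i.+1) => [|ji|//]; first by lia.
have im : i.+1 < m.+1 by have := ltn_ord j; lia.
pose c : 'I_m.+1 := Ordinal im.
have ic : i < c by rewrite /= ltnSn.
have cj : c < j by [].
have ne : c != i by rewrite -val_eqE /= -[X in _ != X]/(nat_of_ord i); lia.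
case: (ltngtP (s i) (s c)) => [ic'|ci|/eqP]; last by rewrite eq_sym (negbTE (perm_neq s ne)).
  by case: (N i j i c ij sij ic ic') => _ E; move: cj; rewrite E ltnn.
have cj' : s c < s j := ltn_trans ci sij.
by case: (N i j c j ij sij cj cj') => E _; move: ic; rewrite E ltnn.
Qed.

Definition phiB s : 'I_m.+1 :=
  if [pick i : 'I_m.+1 | (0 < i) && (s (inord i.-1) < s i)] is Some i then i else ord0.

Lemma nib_unique s : nib s -> s = gB (phiB s).
Proof.
move=> Ns; have N := Ns; move/nibP: N => N.
apply: perm_cmp => i j ij; rewrite gB_cmp //.
rewrite /phiB; case: pickP => [k /andP [k0 Hk]|none] /=.
  rewrite k0 /=.
  have km : k.-1 < m.+1 by have := ltn_ord k; lia.
  have kk : nat_of_ord (inord k.-1 : 'I_m.+1) = k.-1 by rewrite inordK.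
  have lt : (inord k.-1 : 'I_m.+1) < k by rewrite kk; lia.
  apply/idP/idP => [sij|/andP [/eqP ei /eqP ej]].
    case: (N i j _ _ ij sij lt Hk) => -> ->.
    by rewrite kk !eqxx.
  have -> : i = inord k.-1 by apply: ord_inj; rewrite kk.
  by have -> : j = k by apply: ord_inj.
rewrite /=; apply/negbTE/negP => sij.
have := nib_adj Ns ij sij => ej.
have := none j; rewrite /= ej /=.
have -> : (inord i : 'I_m.+1) = i by rewrite inord_val.
by rewrite sij.
Qed.


Lemma gB_inj : injective gB.
Proof.
have H : forall k k', gB k = gB k' -> 0 < k -> k = k'.
  move=> k k' E k0.
  have km : k.-1 < m.+1 by have := ltn_ord k; lia.
  have kk : nat_of_ord (inord k.-1 : 'I_m.+1) = k.-1 by rewrite inordK.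
  have lt : (inord k.-1 : 'I_m.+1) < k by rewrite kk; lia.
  have h1 := gB_cmp k lt; have h2 := gB_cmp k' lt; rewrite E in h1.
  rewrite h1 k0 kk eqxx /= in h2.
  rewrite eqxx in h2; move/esym: h2 => /andP [_ /eqP e2]; exact: ord_inj.
move=> k k' E; case: (posnP k) => [k0|]; last exact: H.
case: (posnP k') => [k0'|]; last by move=> p; apply: esym; apply: H.
by apply: ord_inj; rewrite k0 k0'.
Qed.

Lemma card_nib : #|[set s : 'S_m.+1 | nib s]| = m.+1.
Proof.
rewrite (_ : [set s | nib s] = gB @: setT).
  by rewrite card_imset ?cardsT ?card_ord //; apply: gB_inj.
apply/setP => s; rewrite inE; apply/idP/imsetP => [N|[k _ ->]]; last exact: gB_nib.
by exists (phiB s) => //; apply: nib_unique.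
Qed.

Lemma cmp2 s (x y : 'I_m.+1) : x < y -> (s x < s y) \/ (s y < s x).
Proof.
move=> xy; case: (ltngtP (s x) (s y)) => [||/ord_inj/perm_inj E]; [by left|by right|].
by move: xy; rewrite E ltnn.
Qed.

Lemma AvB : Av m.+1 [:: [:: 1; 2; 3]; [:: 1; 3; 2]; [:: 2; 1; 3]; [:: 3; 4; 1; 2]] = [set s | nib s].
Proof.
apply/setP => s; rewrite !inE /= /avoids andbT.
apply/idP/idP => [/and4P [H1 H2 H3 H4]|Ns]; last first.
  move/nibP: Ns => N.
  apply/and4P; split; apply/negP.
  - move/occ3 => [a [b [c [ab bc e1 e2 e3]]]].
    case: (N a b b c ab (e1 : nat_of_ord (s a) < nat_of_ord (s b)) bc (e3 : nat_of_ord (s b) < nat_of_ord (s c))) => E _.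
    by move: ab; rewrite E ltnn.
  - move/occ3 => [a [b [c [ab bc e1 e2 e3]]]].
    case: (N a b a c ab (e1 : nat_of_ord (s a) < nat_of_ord (s b)) (ltn_trans ab bc) (e2 : nat_of_ord (s a) < nat_of_ord (s c))) => _ E.
    by move: bc; rewrite E ltnn.
  - move/occ3 => [a [b [c [ab bc e1 e2 e3]]]].
    case: (N a c b c (ltn_trans ab bc) (e2 : nat_of_ord (s a) < nat_of_ord (s c)) bc (e3 : nat_of_ord (s b) < nat_of_ord (s c))) => E _.
    by move: ab; rewrite E ltnn.
  - move/occ4 => [a [b [c [d [ab bc cd [e1 _ _] [_ _ e6]]]]]].
    case: (N a b c d ab (e1 : nat_of_ord (s a) < nat_of_ord (s b)) cd (e6 : nat_of_ord (s c) < nat_of_ord (s d))) => E _.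
    by move: (ltn_trans ab bc); rewrite E ltnn.
have ff : forall x y : nat, y < x -> (x < y) = false.
  by move=> x y yx; apply/negbTE; rewrite -leqNgt; apply: ltnW.
have T1 : forall a b c : 'I_m.+1, a < b -> b < c -> s a < s b -> s a < s c -> False.
  move=> a b c ab bc sab sac; case: (cmp2 s bc) => [sbc|scb].
    by case/negP: H1; apply: (mk3 ab bc).
  by case/negP: H2; apply: (mk3 ab bc) => //=; rewrite /oneline /= ff.
have T2 : forall a b c : 'I_m.+1, a < b -> b < c -> s a < s c -> s b < s c -> False.
  move=> a b c ab bc sac sbc; case: (cmp2 s ab) => [sab|sba].
    by case/negP: H1; apply: (mk3 ab bc).
  by case/negP: H3; apply: (mk3 ab bc) => //=; rewrite /oneline /= ff.
have T3 : forall a b c : 'I_m.+1, a < b -> b < c -> s a < s b -> s b < s c -> False.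
  move=> a b c ab bc sab sbc.
  by case/negP: H1; apply: (mk3 ab bc) => //=; rewrite /oneline /= (ltn_trans sab sbc).
have Q : forall a b c d : 'I_m.+1, a < b -> b < c -> c < d -> s c < s d -> s d < s a -> s a < s b -> False.
  move=> a b c d ab bc cd scd sda sab.
  case/negP: H4; apply: (mk4 ab bc cd) => //=; rewrite /oneline /= ff //.
  - exact: ltn_trans scd sda.
  - exact: ltn_trans (ltn_trans scd sda) sab.
  - exact: ltn_trans sda sab.
have core : forall i j k l : 'I_m.+1, i <= k -> i < j -> s i < s j -> k < l -> s k < s l -> i = k /\ j = l.
  move=> i j k l ik ij sij kl skl.
  case: (ltngtP i k) => [ik'|ki|eik]; first last.
  - have ek : i = k := ord_inj eik; subst k.
    case: (ltngtP j l) => [jl|lj|ejl].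
    + by case: (T1 i j l ij jl sij skl).
    + by case: (T1 i l j kl lj skl sij).
    + by split => //; apply: ord_inj.
  - by move: ik ki; lia.
  case: (ltngtP j k) => [jk|kj|ejk].
  - case: (cmp2 s (ltn_trans ij (ltn_trans jk kl))) => [sil|sli].
      by case: (T1 i j l ij (ltn_trans jk kl) sij sil).
    by case: (Q i j k l ij jk kl skl sli sij).
  - case: (ltngtP l j) => [lj|jl|elj].
    + case: (cmp2 s kj) => [skj|sjk].
        by case: (T1 k l j kl lj skl skj).
      by case: (T1 i k j ik' kj (ltn_trans sij sjk) sij).
    + case: (cmp2 s kj) => [skj|sjk].
        by case: (T2 i k j ik' kj sij skj).
      by case: (T2 k j l kj jl skl (ltn_trans sjk skl)).
    + have el : l = j := ord_inj elj; subst l.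
      by case: (T2 i k j ik' kj sij skl).
  - have ej : j = k := ord_inj ejk; subst k.
    by case: (T3 i j l ij kl sij skl).
apply/nibP => i j k l ij sij kl skl.
case: (leqP i k) => ik; first exact: core.
by case: (core k l i j (ltnW ik) kl skl ij sij) => -> ->.
Qed.

End CaseB.

Theorem theorem4p3 :
  forall n : nat, 0 < n ->
    (forall tau : 'S_4,
       has (contains tau) [:: [:: 1; 2; 3]; [:: 1; 3; 2]; [:: 2; 3; 1]] ->
       #|Av n [:: [:: 1; 2; 3]; [:: 1; 3; 2]; [:: 2; 3; 1]; perm_seq tau]| = n)
    /\
    #|Av n [:: [:: 1; 2; 3]; [:: 1; 3; 2]; [:: 2; 1; 3]; [:: 3; 4; 1; 2]]| = n.
Proof.
case=> [//|m] _; split.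
  by move=> tau Htau; rewrite AvA // card_dec.
by rewrite AvB card_nib.
Qed.
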